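(* Let $X$ be a tree of bounded valence, $p$ a transition kernel on $X_0$ with $(X_0,p)$ irreducible and $k\ge0$ with $d(x,y)>k\Rightarrow p(x,y)=0$. Let $\gamma$ be a $p$-admissible path with source $a$ and aim $b$, and let $x\neq y$ be vertices with $a\in\mathcal{B}(x)\setminus\mathcal{B}(y)$ and $b\in\mathcal{B}(y)$; write $[x,y]=(x_0,\dots,x_m)$. Then there exist an integer $0<l\le m$, a tuple $(c_0,\dots,c_l)\in\Xi_{[x,y]}$ with crossing indices $(i_1,\dots,i_l)$, and $p$-admissible paths $\gamma_1,\dots,\gamma_l,\gamma_f$ with $\gamma_s\in\mathcal{P}h(c_{s-1},c_s;\mathcal{B}(x_{i_s})^\complement)$ for $1\le s\le l$ and $\gamma_f\in\mathcal{P}h(c_l,b)$, such that $$\gamma=\gamma_1\ast\cdots\ast\gamma_l\ast\gamma_f.$$ The tuple $(c_0,\dots,c_l)$ and this decomposition are unique with these properties.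
   Context: A $p$-admissible path is $(\omega_0,\dots,\omega_n)$, $n\ge0$, with $p(\omega_{i-1},\omega_i)>0$ for all $i$; source $\omega_0$, aim $\omega_n$. $\mathcal{P}h(a,b)$ is the set of those from $a$ to $b$, and $\mathcal{P}h(a,b;\Omega)$ those whose intermediate vertices $\omega_1,\dots,\omega_{n-1}$ lie in $\Omega$. Concatenation $(\omega_0,\dots,\omega_n)\ast(\omega_n,\omega'_1,\dots,\omega'_{m})=(\omega_0,\dots,\omega_n,\omega'_1,\dots,\omega'_m)$. $\mathcal{B}(w)=\{v:d(w,v)\le k\}$, $\partial\mathcal{B}(w)=\{v:d(w,v)=k+1\}$, $\Xi_w=\{(a,b)\in\partial\mathcal{B}(w)\times\mathcal{B}(w):\mathcal{P}h(a,b;\mathcal{B}(w)^\complement)\ne\emptyset\}$. $\Xi_{[x,y]}$ is the set of tuples $(c_0,\dots,c_l)$, $0<l\le m$, for which there are integers $0<i_1<\dots<i_l\le m$ (the crossing indices, uniquely given by $i_s=1+\max\{i:c_{s-1}\in\mathcal{B}(x_i)\}$) with $c_0\in\mathcal{B}(x)\cap\partial\mathcal{B}(x_{i_1})$, $c_j\in\mathcal{B}(x_{i_j})\cap\partial\mathcal{B}(x_{i_{j+1}})$, $c_l\in\mathcal{B}(x_{i_l})\cap\mathcal{B}(y)$, and $(c_{j-1},c_j)\in\Xi_{x_{i_j}}$. *)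

(* Defs.v *)
From Stdlib Require Import Reals Lra Lia List Classical ClassicalEpsilon.
Import ListNotations.
Open Scope R_scope.
Set Implicit Arguments.

Section Graphs.
Variable V : Type.

Fixpoint chain (R : V -> V -> Prop) (w : list V) : Prop :=
  match w with
  | u :: ((v :: _) as t) => R u v /\ chain R t
  | _ => True
  end.

Definition walk (adj : V -> V -> Prop) (x y : V) (n : nat) (w : list V) : Prop :=
  exists t, w = x :: t /\ length t = n /\ chain adj w /\ last w x = y.

Definition simple_graph (adj : V -> V -> Prop) : Prop :=
  (forall u v, adj u v -> adj v u) /\ (forall u, ~ adj u u).

Definition connected (adj : V -> V -> Prop) : Prop :=
  forall x y, exists n w, walk adj x y n w.

Definition has_cycle (adj : V -> V -> Prop) : Prop :=
  exists v0 t, (3 <= length (v0 :: t))%nat /\ NoDup (v0 :: t) /\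
    chain adj (v0 :: t) /\ adj (last t v0) v0.

Definition is_tree (adj : V -> V -> Prop) : Prop :=
  simple_graph adj /\ connected adj /\ ~ has_cycle adj.

Definition bounded_valence (adj : V -> V -> Prop) : Prop :=
  exists N : nat, forall v (s : list V), NoDup s -> Forall (adj v) s -> (length s <= N)%nat.

Definition is_dist (adj : V -> V -> Prop) (x y : V) (n : nat) : Prop :=
  (exists w, walk adj x y n w) /\ (forall m, (m < n)%nat -> forall w, ~ walk adj x y m w).

Definition gdist (adj : V -> V -> Prop) (x y : V) : nat :=
  epsilon (inhabits 0%nat) (fun n => is_dist adj x y n).

Definition geodesic (adj : V -> V -> Prop) (x y : V) (xs : nat -> V) (m : nat) : Prop :=
  xs 0%nat = x /\ xs m = y /\ m = gdist adj x y /\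
  (forall i, (i < m)%nat -> adj (xs i) (xs (S i))).

Definition ball (adj : V -> V -> Prop) (k : nat) (w v : V) : Prop := (gdist adj w v <= k)%nat.
Definition sphere (adj : V -> V -> Prop) (k : nat) (w v : V) : Prop := gdist adj w v = S k.

(** Transition kernel: nonnegative entries, each row sums to 1
    (sum of a nonnegative family = supremum of its finite partial sums). *)
Definition row_sum_one (p : V -> V -> R) (x : V) : Prop :=
  is_lub (fun r => exists s : list V, NoDup s /\ r = fold_right Rplus 0 (map (p x) s)) 1.

Definition transition_kernel (p : V -> V -> R) : Prop :=
  (forall x y, 0 <= p x y) /\ (forall x, row_sum_one p x).

Definition admissible (p : V -> V -> R) (g : list V) : Prop :=
  g <> [] /\ chain (fun u v => 0 < p u v) g.

Definition Ph (p : V -> V -> R) (a b : V) (g : list V) : Prop :=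
  exists t, g = a :: t /\ admissible p g /\ last g a = b.

Definition Ph_in (p : V -> V -> R) (a b : V) (Om : V -> Prop) (g : list V) : Prop :=
  exists t, g = a :: t /\ admissible p g /\ last g a = b /\ Forall Om (removelast t).

Definition irreducible (p : V -> V -> R) : Prop :=
  forall x y, exists g, Ph p x y g.

(** concatenation (w0..wn) * (wn,w'1..w'm) *)
Definition pconcat (g1 g2 : list V) : list V := g1 ++ tl g2.

Definition concat_all (gs : nat -> list V) (l : nat) (gf : list V) : list V :=
  fold_right pconcat gf (map gs (seq 1 l)).

Definition Xi_w (adj : V -> V -> Prop) (p : V -> V -> R) (k : nat) (w a b : V) : Prop :=
  sphere adj k w a /\ ball adj k w b /\
  exists g, Ph_in p a b (fun v => ~ ball adj k w v) g.

Definition in_Xi_geod (adj : V -> V -> Prop) (p : V -> V -> R) (k : nat)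
    (xs : nat -> V) (m : nat) (l : nat) (c : nat -> V) (i : nat -> nat) : Prop :=
  (0 < l <= m)%nat /\
  (0 < i 1%nat)%nat /\ (forall s, (1 <= s < l)%nat -> (i s < i (S s))%nat) /\ (i l <= m)%nat /\
  ball adj k (xs 0%nat) (c 0%nat) /\ sphere adj k (xs (i 1%nat)) (c 0%nat) /\
  (forall j, (1 <= j < l)%nat ->
     ball adj k (xs (i j)) (c j) /\ sphere adj k (xs (i (S j))) (c j)) /\
  ball adj k (xs (i l)) (c l) /\ ball adj k (xs m) (c l) /\
  (forall j, (1 <= j <= l)%nat -> Xi_w adj p k (xs (i j)) (c (pred j)) (c j)).

Definition decomposition (adj : V -> V -> Prop) (p : V -> V -> R) (k : nat)
    (xs : nat -> V) (m : nat) (b : V) (gamma : list V)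
    (l : nat) (c : nat -> V) (i : nat -> nat) (gs : nat -> list V) (gf : list V) : Prop :=
  in_Xi_geod adj p k xs m l c i /\
  (forall s, (1 <= s <= l)%nat ->
     Ph_in p (c (pred s)) (c s) (fun v => ~ ball adj k (xs (i s)) v) (gs s)) /\
  Ph p (c l) b gf /\
  gamma = concat_all gs l gf.

End Graphs.

(* Main.v *)
Require Import Defs.
From Stdlib Require Import Reals Lra List Arith Lia Classical ClassicalEpsilon.
Import ListNotations.
Open Scope R_scope.

Lemma last_nth' {V} (l : list V) d : last l d = nth (pred (length l)) l d.
Proof.
  induction l as [|a l IH]; [reflexivity|].
  destruct l as [|b l]; [reflexivity|].
  change (last (b :: l) d = nth (length l) (b :: l) d). rewrite IH. reflexivity.
Qed.

Lemma last_default {V} (a : V) l d d' : last (a :: l) d = last (a :: l) d'.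
Proof.
  revert a; induction l as [|b l IH]; intros a; [reflexivity|].
  change (last (b :: l) d = last (b :: l) d'). apply IH.
Qed.

Lemma last_app' {V} (l1 l2 : list V) d : l2 <> [] -> last (l1 ++ l2) d = last l2 d.
Proof.
  intros H. induction l1 as [|a l1 IH]; [reflexivity|].
  simpl. rewrite <- IH. destruct (l1 ++ l2) eqn:E; [|reflexivity].
  apply app_eq_nil in E. tauto.
Qed.

Lemma chain_nth {V} (R : V -> V -> Prop) l d :
  chain R l <-> (forall i, (S i < length l)%nat -> R (nth i l d) (nth (S i) l d)).
Proof.
  induction l as [|a l IH].
  - simpl; split; intros; [lia|exact I].
  - destruct l as [|b l].
    + simpl; split; intros; [lia|exact I].
    + split.
      * intros [H1 H2] i Hi. destruct i; [exact H1|].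
        apply IH; [exact H2| simpl in *; lia].
      * intros H. split; [apply (H 0%nat); simpl; lia|].
        apply IH. intros i Hi. apply (H (S i)). simpl in *; lia.
Qed.

Lemma chain_app {V} (R : V -> V -> Prop) l1 l2 :
  chain R (l1 ++ l2) -> chain R l1 /\ chain R l2.
Proof.
  induction l1 as [|a l1 IH]; intros H; [split; [exact I|exact H]|].
  destruct l1 as [|b l1].
  - split; [exact I|]. simpl in H. destruct l2; [exact I|]. exact (proj2 H).
  - simpl in H. destruct H as [H1 H2]. destruct (IH H2). split; [|assumption].
    split; assumption.
Qed.

Definition fwalk {V} (adj : V -> V -> Prop) (x y : V) (n : nat) (f : nat -> V) :=
  f 0%nat = x /\ f n = y /\ forall i, (i < n)%nat -> adj (f i) (f (S i)).

Lemma walk_fwalk {V} (adj : V -> V -> Prop) x y n w :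
  walk adj x y n w -> exists f, fwalk adj x y n f.
Proof.
  intros (t & -> & Hl & Hc & Hlast).
  exists (fun i => nth i (x :: t) x). repeat split.
  - rewrite <- Hlast, last_nth'. simpl. rewrite Hl. reflexivity.
  - intros i Hi. apply (proj1 (chain_nth adj (x :: t) x)); [exact Hc|]. simpl; lia.
Qed.

Lemma nth_mapseq {V} (f : nat -> V) n i d : (i < n)%nat -> nth i (map f (seq 0 n)) d = f i.
Proof.
  intros H. rewrite (nth_indep _ _ (f 0%nat)) by (rewrite length_map, length_seq; lia).
  rewrite map_nth, seq_nth by lia. reflexivity.
Qed.

Lemma nth_mapseq' {V} (f : nat -> V) a n i d : (i < n)%nat -> nth i (map f (seq a n)) d = f (a + i)%nat.
Proof.
  intros H. rewrite (nth_indep _ _ (f 0%nat)) by (rewrite length_map, length_seq; lia).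
  rewrite map_nth, seq_nth by lia. reflexivity.
Qed.

Lemma fwalk_walk {V} (adj : V -> V -> Prop) x y n f :
  fwalk adj x y n f -> walk adj x y n (map f (seq 0 (S n))).
Proof.
  intros (H0 & Hn & Hs). exists (map f (seq 1 n)). repeat split.
  - simpl. rewrite H0. reflexivity.
  - rewrite length_map, length_seq. reflexivity.
  - apply (chain_nth adj _ x). rewrite length_map, length_seq. intros i Hi.
    rewrite !nth_mapseq by lia. apply Hs; lia.
  - rewrite last_nth', length_map, length_seq. rewrite nth_mapseq by lia. simpl; exact Hn.
Qed.

Lemma min_exists (P : nat -> Prop) : (exists n, P n) -> exists n, P n /\ forall m, (m < n)%nat -> ~ P m.
Proof.
  intros [n Hn]. revert Hn. induction n as [n IH] using (well_founded_induction lt_wf).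
  intros Hn. destruct (classic (exists m, (m < n)%nat /\ P m)) as [[m [Hm Pm]]|H].
  - exact (IH m Hm Pm).
  - exists n. split; [exact Hn|]. intros m Hm Pm. apply H. eauto.
Qed.

Section Dist.
End Dist.

Lemma gdist_spec {V} (adj : V -> V -> Prop) : connected adj ->
  forall x y, is_dist adj x y (gdist adj x y).
Proof.
  intros Hc x y. unfold gdist. apply epsilon_spec.
  destruct (Hc x y) as [n [w Hw]].
  destruct (min_exists (fun n => exists w, walk adj x y n w)) as [n0 [[w0 H0] Hmin]]; [eauto|].
  exists n0. split; [eauto|]. intros m Hm w' Hw'. apply (Hmin m Hm). eauto.
Qed.

Lemma D_walk {V} (adj : V -> V -> Prop) : connected adj ->
  forall x y, exists f, fwalk adj x y (gdist adj x y) f.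
Proof.
  intros Hc x y. destruct (gdist_spec adj Hc x y) as [[w Hw] _]. eapply walk_fwalk; eauto.
Qed.

Lemma D_min {V} (adj : V -> V -> Prop) : connected adj ->
  forall x y n f, fwalk adj x y n f -> (gdist adj x y <= n)%nat.
Proof.
  intros Hc x y n f Hf. destruct (gdist_spec adj Hc x y) as [_ H].
  destruct (Nat.le_gt_cases (gdist adj x y) n) as [|Hlt]; [assumption|].
  exfalso. apply (H n Hlt _ (fwalk_walk adj x y n f Hf)).
Qed.
Section Geo.
Variable V : Type.
Variable adj : V -> V -> Prop.
Hypothesis Htree : is_tree adj.

Let Hconn : connected adj. Proof. exact (proj1 (proj2 Htree)). Qed.
Let Hsym : forall u v, adj u v -> adj v u. Proof. exact (proj1 (proj1 Htree)). Qed.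
Let Hirr : forall u, ~ adj u u. Proof. exact (proj2 (proj1 Htree)). Qed.
Let Hnocyc : ~ has_cycle adj. Proof. exact (proj2 (proj2 Htree)). Qed.

Local Notation D := (gdist adj).

Lemma D_sym x y : D x y = D y x.
Proof.
  assert (H : forall x y, (D y x <= D x y)%nat).
  { intros a b. destruct (D_walk adj Hconn a b) as [f (H0 & Hn & Hs)].
    apply (D_min adj Hconn b a _ (fun i => f (D a b - i)%nat)).
    repeat split.
    - rewrite Nat.sub_0_r. exact Hn.
    - rewrite Nat.sub_diag. exact H0.
    - intros i Hi. apply Hsym. replace (D a b - i)%nat with (S (D a b - S i)) by lia.
      apply Hs. lia. }
  apply Nat.le_antisymm; apply H.
Qed.

Lemma D_refl x : D x x = 0%nat.
Proof.
  assert (H := D_min adj Hconn x x 0 (fun _ => x)).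
  assert ((D x x <= 0)%nat) by (apply H; repeat split; intros; lia). lia.
Qed.

Lemma D_zero x y : D x y = 0%nat -> x = y.
Proof.
  intros H. destruct (D_walk adj Hconn x y) as [f (H0 & Hn & _)]. rewrite H in Hn. congruence.
Qed.

Lemma D_tri x y z : (D x z <= D x y + D y z)%nat.
Proof.
  destruct (D_walk adj Hconn x y) as [f (Hf0 & Hfn & Hfs)].
  destruct (D_walk adj Hconn y z) as [g (Hg0 & Hgn & Hgs)].
  apply (D_min adj Hconn x z _ (fun i => if (i <=? D x y)%nat then f i else g (i - D x y)%nat)).
  repeat split.
  - simpl. exact Hf0.
  - destruct (D y z) eqn:E.
    + rewrite Nat.add_0_r, Nat.leb_refl. rewrite Hfn. apply D_zero in E. congruence.
    + replace (D x y + S n <=? D x y)%nat with false by (symmetry; apply Nat.leb_gt; lia).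
      replace (D x y + S n - D x y)%nat with (S n) by lia. exact Hgn.
  - intros i Hi. destruct (Nat.le_gt_cases (S i) (D x y)).
    + rewrite (proj2 (Nat.leb_le _ _) H), (proj2 (Nat.leb_le i (D x y))) by lia. apply Hfs; lia.
    + replace (S i <=? D x y)%nat with false by (symmetry; apply Nat.leb_gt; lia).
      destruct (Nat.eq_dec i (D x y)) as [->|Hne].
      * rewrite Nat.leb_refl.
        replace (S (D x y) - D x y)%nat with 1%nat by lia. rewrite Hfn, <- Hg0. apply Hgs. lia.
      * replace (i <=? D x y)%nat with false by (symmetry; apply Nat.leb_gt; lia).
        replace (S i - D x y)%nat with (S (i - D x y)) by lia. apply Hgs; lia.
Qed.

Lemma D_adj1 x y : adj x y -> (D x y <= 1)%nat.
Proof.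
  intros H. apply (D_min adj Hconn x y 1 (fun i => match i with 0 => x | _ => y end)).
  repeat split. intros i Hi. destruct i; [exact H|lia].
Qed.

Lemma D_prefix x y f : fwalk adj x y (D x y) f -> forall s, (s <= D x y)%nat -> D x (f s) = s.
Proof.
  intros (H0 & Hn & Hs) s Hsl. apply Nat.le_antisymm.
  - apply (D_min adj Hconn x (f s) s f). repeat split; [exact H0|]. intros; apply Hs; lia.
  - assert (D (f s) y <= D x y - s)%nat.
    { apply (D_min adj Hconn _ _ (D x y - s)%nat (fun i => f (s + i)%nat)). repeat split.
      - f_equal; lia.
      - replace (s + (D x y - s))%nat with (D x y) by lia. exact Hn.
      - intros i Hi. replace (s + S i)%nat with (S (s + i)) by lia. apply Hs; lia. }
    pose proof (D_tri x (f s) y). lia.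
Qed.

Lemma cycle_of_fun (cyc : nat -> V) N : (3 <= N)%nat ->
  (forall i j, (i < N)%nat -> (j < N)%nat -> cyc i = cyc j -> i = j) ->
  (forall i, (S i < N)%nat -> adj (cyc i) (cyc (S i))) ->
  adj (cyc (pred N)) (cyc 0%nat) -> has_cycle adj.
Proof.
  intros HN Hinj Hs Hl. exists (cyc 0%nat), (map cyc (seq 1 (pred N))).
  assert (E : cyc 0%nat :: map cyc (seq 1 (pred N)) = map cyc (seq 0 N)).
  { destruct N; [lia|]. reflexivity. }
  rewrite E. repeat split.
  - rewrite length_map, length_seq. exact HN.
  - apply (NoDup_nth _ (cyc 0%nat)). rewrite length_map, length_seq. intros i j Hi Hj.
    rewrite !nth_mapseq by lia. apply Hinj; assumption.
  - apply (chain_nth adj _ (cyc 0%nat)). rewrite length_map, length_seq. intros i Hi.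
    rewrite !nth_mapseq by lia. apply Hs; lia.
  - clear E. rewrite last_nth', length_map, length_seq.
    destruct N as [|[|N]]; try lia. simpl pred in *.
    rewrite nth_mapseq' by lia. replace (1 + N)%nat with (S N) by lia. exact Hl.
Qed.

Lemma max_exists (R : nat -> Prop) n : R 0%nat ->
  exists s, (s <= n)%nat /\ R s /\ forall s', (s < s' <= n)%nat -> ~ R s'.
Proof.
  intros H0. induction n as [|n IH].
  - exists 0%nat. repeat split; auto. intros; lia.
  - destruct (classic (R (S n))) as [HR|HR].
    + exists (S n). repeat split; auto. intros; lia.
    + destruct IH as (s & Hs & Rs & Hm). exists s. repeat split; auto.
      intros s' Hs'. destruct (Nat.eq_dec s' (S n)) as [->|]; auto. apply Hm; lia.
Qed.

Definition geos v (P : nat -> V) e :=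
  P 0%nat = v /\ (forall s, (s < e)%nat -> adj (P s) (P (S s))) /\
  (forall s, (s <= e)%nat -> D v (P s) = s).

Lemma pair_cycle v P Q e1 e2 : geos v P e1 -> geos v Q e2 -> (e1 = e2 \/ e1 = S e2) ->
  adj (P e1) (Q e2) -> P e2 <> Q e2 -> False.
Proof.
  intros (HP0 & HPs & HPd) (HQ0 & HQs & HQd) He Hadj Hne.
  destruct (max_exists (fun s => P s = Q s) e2) as (s & Hs & Rs & Hm); [congruence|].
  assert (Hs2 : (s < e2)%nat). { destruct (Nat.eq_dec s e2); [subst; contradiction|lia]. }
  apply Hnocyc.
  apply (cycle_of_fun (fun i => if (i <=? e1 - s)%nat then P (s + i)%nat else Q (e2 + e1 - s + 1 - i)%nat)
    (e1 + e2 - 2 * s + 1)).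
  - lia.
  - intros i j Hi Hj.
    assert (Pinj : forall a b, (a <= e1)%nat -> (b <= e1)%nat -> P a = P b -> a = b).
    { intros a b Ha Hb E. rewrite <- (HPd a Ha), <- (HPd b Hb), E. reflexivity. }
    assert (Qinj : forall a b, (a <= e2)%nat -> (b <= e2)%nat -> Q a = Q b -> a = b).
    { intros a b Ha Hb E. rewrite <- (HQd a Ha), <- (HQd b Hb), E. reflexivity. }
    assert (PQ : forall a b, (s <= a <= e1)%nat -> (s < b <= e2)%nat -> P a <> Q b).
    { intros a b Ha Hb E. assert (a = b).
      { rewrite <- (HPd a) by lia. rewrite <- (HQd b) by lia. rewrite E. reflexivity. }
      subst. apply (Hm b); [lia|exact E]. }
    destruct (Nat.leb_spec i (e1 - s)); destruct (Nat.leb_spec j (e1 - s)); intros E.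
    + apply Pinj in E; lia.
    + exfalso. apply (PQ (s + i)%nat (e2 + e1 - s + 1 - j)%nat); [lia|lia|exact E].
    + exfalso. apply (PQ (s + j)%nat (e2 + e1 - s + 1 - i)%nat); [lia|lia|symmetry; exact E].
    + apply Qinj in E; lia.
  - intros i Hi. destruct (Nat.leb_spec (S i) (e1 - s)).
    + rewrite (proj2 (Nat.leb_le i (e1 - s))) by lia.
      replace (s + S i)%nat with (S (s + i)) by lia. apply HPs; lia.
    + destruct (Nat.eq_dec i (e1 - s)) as [->|Hne'].
      * rewrite Nat.leb_refl. replace (s + (e1 - s))%nat with e1 by lia.
        replace (e2 + e1 - s + 1 - S (e1 - s))%nat with e2 by lia. exact Hadj.
      * replace (i <=? e1 - s)%nat with false by (symmetry; apply Nat.leb_gt; lia).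
        replace (e2 + e1 - s + 1 - i)%nat with (S (e2 + e1 - s + 1 - S i)) by lia.
        apply Hsym, HQs. lia.
  - replace (pred (e1 + e2 - 2 * s + 1)) with (e1 + e2 - 2 * s)%nat by lia.
    replace (e1 + e2 - 2 * s <=? e1 - s)%nat with false by (symmetry; apply Nat.leb_gt; lia).
    simpl (0 <=? _)%nat. rewrite Nat.add_0_r.
    replace (e2 + e1 - s + 1 - (e1 + e2 - 2 * s))%nat with (S s) by lia.
    rewrite Rs. apply Hsym, HQs. lia.
Qed.

Lemma walk_geos v u : exists f, geos v f (D v u) /\ f (D v u) = u.
Proof.
  destruct (D_walk adj Hconn v u) as [f Hf]. exists f.
  pose proof (D_prefix v u f Hf) as Hp. destruct Hf as (H0 & Hn & Hs).
  repeat split; auto.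
Qed.

Lemma T1 v u w : adj u w -> D v u <> D v w.
Proof.
  intros Ha E. destruct (walk_geos v u) as [f [Gf Hf]]. destruct (walk_geos v w) as [g [Gg Hg]].
  rewrite E in Gf, Hf.
  apply (pair_cycle v f g (D v w) (D v w) Gf Gg (or_introl eq_refl)).
  - rewrite Hf, Hg. exact Ha.
  - rewrite Hf, Hg. intros ->. exact (Hirr _ Ha).
Qed.

Lemma T2 v u1 u2 w e : adj u1 w -> adj u2 w -> D v u1 = e -> D v u2 = e -> D v w = S e -> u1 = u2.
Proof.
  intros H1 H2 E1 E2 Ew. apply NNPP. intros Hne.
  destruct (walk_geos v u1) as [f [Gf Hf]]. destruct (walk_geos v u2) as [g [Gg Hg]].
  rewrite E1 in Gf, Hf. rewrite E2 in Gg, Hg.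
  apply (pair_cycle v (fun s => if (s <=? e)%nat then f s else w) g (S e) e); auto.
  - destruct Gf as (F0 & Fs & Fd). repeat split.
    + simpl. exact F0.
    + intros s Hs. destruct (Nat.leb_spec (S s) e).
      * rewrite (proj2 (Nat.leb_le s e)) by lia. apply Fs; lia.
      * replace s with e by lia. rewrite Nat.leb_refl.
        replace (S e <=? e)%nat with false by (symmetry; apply Nat.leb_gt; lia). rewrite Hf. exact H1.
    + intros s Hs. destruct (Nat.leb_spec s e). apply Fd; lia. replace s with (S e) by lia. exact Ew.
  - replace (S e <=? e)%nat with false by (symmetry; apply Nat.leb_gt; lia). rewrite Hg. apply Hsym. exact H2.
  - rewrite Nat.leb_refl, Hf, Hg. exact Hne.
Qed.

Lemma D_closer v w e : D v w = S e -> exists u, adj u w /\ D v u = e.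
Proof.
  intros E. destruct (D_walk adj Hconn v w) as [f Hf]. pose proof (D_prefix v w f Hf) as Hp.
  destruct Hf as (H0 & Hn & Hs). exists (f e). split.
  - rewrite <- Hn, E. apply Hs. lia.
  - apply Hp. lia.
Qed.

Lemma D_step v u w : adj u w -> D v w = S (D v u) \/ D v u = S (D v w).
Proof.
  intros H. pose proof (D_tri v u w). pose proof (D_tri v w u).
  pose proof (D_adj1 u w H). pose proof (D_adj1 w u (Hsym _ _ H)). pose proof (T1 v u w H). lia.
Qed.

Variable xs : nat -> V.
Variable m : nat.
Hypothesis Hxs : forall i, (i < m)%nat -> adj (xs i) (xs (S i)).
Hypothesis Hm : m = D (xs 0%nat) (xs m).

Definition F v t := D (xs t) v.

Lemma G0 t : (S (S t) <= m)%nat -> xs (S (S t)) <> xs t.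
Proof.
  intros Ht E.
  assert (H : (D (xs 0%nat) (xs m) <= m - 2)%nat).
  { apply (D_min adj Hconn _ _ _ (fun i => if (i <=? t)%nat then xs i else xs (i + 2)%nat)).
    repeat split.
    - cbv beta. destruct (Nat.leb_spec (m - 2) t).
      + replace (m - 2)%nat with t by lia. transitivity (xs (S (S t))); [symmetry; exact E| f_equal; lia].
      + f_equal; lia.
    - intros i Hi. destruct (Nat.leb_spec (S i) t).
      + rewrite (proj2 (Nat.leb_le i t)) by lia. apply Hxs; lia.
      + destruct (Nat.eq_dec i t) as [->|].
        * rewrite Nat.leb_refl. rewrite <- E. replace (S t + 2)%nat with (S (S (S t))) by lia.
          apply Hxs; lia.
        * replace (i <=? t)%nat with false by (symmetry; apply Nat.leb_gt; lia).
          replace (S i + 2)%nat with (S (i + 2)) by lia. apply Hxs; lia. }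
  lia.
Qed.

Lemma S1 v t : (t < m)%nat -> F v (S t) = S (F v t) \/ F v t = S (F v (S t)).
Proof.
  intros Ht. unfold F. rewrite !(D_sym _ v). apply D_step. apply Hxs; lia.
Qed.

Lemma S2 v t : (S (S t) <= m)%nat -> F v (S t) = S (F v t) -> F v (S (S t)) = S (F v (S t)).
Proof.
  intros Ht E. destruct (S1 v (S t)) as [|E2]; [lia|assumption|].
  exfalso. apply (G0 t Ht). symmetry.
  unfold F in *. rewrite !(D_sym _ v) in *.
  apply (T2 v (xs t) (xs (S (S t))) (xs (S t)) (D v (xs t)));
    [apply Hxs; lia | apply Hsym, Hxs; lia | reflexivity | lia | lia].
Qed.

Lemma Inc' v t : (1 <= t)%nat -> F v t = S (F v (pred t)) ->
  forall d, (t + d <= m)%nat -> F v (t + d)%nat = (F v t + d)%nat /\ F v (t + d)%nat = S (F v (pred (t + d))).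
Proof.
  intros Ht E d. induction d as [|d IH]; intros Hd.
  - rewrite !Nat.add_0_r. split; [reflexivity|exact E].
  - destruct IH as [IH1 IH2]; [lia|].
    assert (Hs : F v (t + S d)%nat = S (F v (t + d)%nat)).
    { assert (E2 := S2 v (pred (t + d))). replace (S (pred (t + d))) with (t + d)%nat in E2 by lia.
      replace (t + S d)%nat with (S (t + d)) by lia. apply E2; [lia|exact IH2]. }
    split.
    + rewrite Hs, IH1. lia.
    + rewrite Hs. f_equal. f_equal. lia.
Qed.

Lemma Inc v t j : (1 <= t)%nat -> F v t = S (F v (pred t)) -> (t <= j <= m)%nat -> F v j = (F v t + (j - t))%nat.
Proof.
  intros Ht E Hj. replace j with (t + (j - t))%nat at 1 by lia. apply Inc'; auto. lia.
Qed.

Lemma U v i t : (i <= t <= m)%nat -> (F v t <= F v i)%nat \/ ((i < t)%nat /\ F v t = S (F v (pred t))).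
Proof.
  intros Ht. replace t with (i + (t - i))%nat by lia.
  assert (Hd0 : (i + (t - i) <= m)%nat) by lia. generalize (t - i)%nat Hd0. clear Ht Hd0.
  intros d. induction d as [|d IH]; intros Hd.
  - left. rewrite Nat.add_0_r. lia.
  - destruct (S1 v (i + d)%nat) as [E|E]; [lia| |].
    + right. split; [lia|]. replace (i + S d)%nat with (S (i + d)) by lia. rewrite E. f_equal.
    + destruct IH as [IH|[IH1 IH2]]; [lia| |].
      * left. replace (i + S d)%nat with (S (i + d)) by lia. lia.
      * exfalso. assert (E2 := S2 v (pred (i + d))).
        replace (S (pred (i + d))) with (i + d)%nat in E2 by lia.
        replace (S (S (pred (i + d)))) with (S (i + d))%nat in E2 by lia.
        specialize (E2 ltac:(lia) IH2). lia.
Qed.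

Lemma Conv v k i t j : (i <= t <= j)%nat -> (j <= m)%nat -> (F v i <= k)%nat -> (F v j <= k)%nat -> (F v t <= k)%nat.
Proof.
  intros Ht Hj Hi Hjk. destruct (U v i t) as [H|[H1 H2]]; [lia|lia|].
  assert (E := Inc v t j ltac:(lia) H2 ltac:(lia)). lia.
Qed.

Lemma SphereUniq v k i s1 s2 : (i < s1 <= m)%nat -> (i < s2 <= m)%nat -> (F v i <= k)%nat ->
  F v s1 = S k -> F v s2 = S k -> s1 = s2.
Proof.
  intros H1 H2 Hi E1 E2.
  assert (Hgen : forall a b, (i < a <= m)%nat -> (a < b <= m)%nat -> F v a = S k -> F v b = S k -> False).
  { intros a b Ha Hb Ea Eb. destruct (U v i a) as [H|[_ H]]; [lia|lia|].
    assert (E := Inc v a b ltac:(lia) H ltac:(lia)). lia. }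
  destruct (Nat.lt_total s1 s2) as [H|[H|H]];
    [exfalso; exact (Hgen s1 s2 H1 ltac:(lia) E1 E2) | exact H | exfalso; exact (Hgen s2 s1 H2 ltac:(lia) E2 E1)].
Qed.

Lemma Lside_cross v k i s : (i < s <= m)%nat -> (F v i <= k)%nat -> F v s = S k -> F v s = S (F v (pred s)).
Proof.
  intros Hs Hi E. destruct (U v i s) as [H|[_ H]]; [lia|lia|exact H].
Qed.

Lemma Cross_exists v k i : (i <= m)%nat -> (F v i <= k)%nat -> (k < F v m)%nat ->
  exists s, (i < s <= m)%nat /\ F v s = S k.
Proof.
  intros Him Hi Hm'.
  assert (G : forall d, (i + d <= m)%nat -> (k < F v (i + d))%nat -> exists s, (i < s <= i + d)%nat /\ F v s = S k).
  { induction d as [|d IH]; intros Hd Hk.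
    - rewrite Nat.add_0_r in Hk. lia.
    - destruct (Nat.le_gt_cases (F v (i + d)%nat) k).
      + exists (i + S d)%nat. split; [lia|].
        destruct (S1 v (i + d)%nat) as [E|E]; [lia| |];
        replace (i + S d)%nat with (S (i + d)) in * by lia; lia.
      + destruct (IH ltac:(lia) H) as (s & Hs & Es). exists s. split; [lia|exact Es]. }
  destruct (G (m - i)%nat) as (s & Hs & Es); [lia|replace (i + (m - i))%nat with m by lia; exact Hm'|].
  exists s. split; [lia|exact Es].
Qed.

Lemma notLside v k s : (1 <= s <= m)%nat -> (k < F v s)%nat -> (F v m <= k)%nat -> F v s <> S (F v (pred s)).
Proof.
  intros Hs Hk Hm' E. assert (E2 := Inc v s m ltac:(lia) E ltac:(lia)). lia.
Qed.
Lemma Edge L c w w' : adj L c -> adj w w' -> D c w = S (D L w) -> D c w' <> S (D L w') -> w = L /\ w' = c.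
Proof.
  intros HLc Hww E Hn.
  assert (A1 := D_step w' L c HLc). rewrite !(D_sym w') in A1.
  assert (A2 := D_step c w w' Hww). assert (A3 := D_step L w w' Hww).
  assert (Hc' : D c w' = D L w) by lia. assert (HL' : D L w' = S (D L w)) by lia.
  destruct (D L w) as [|e] eqn:Ee.
  - apply D_zero in Ee. apply D_zero in Hc'. split; congruence.
  - destruct (D_closer L w e Ee) as (u & Hu & Du).
    assert (B1 := D_tri c L u). assert (B2 := D_adj1 c L (Hsym _ _ HLc)).
    assert (B3 := D_step c u w Hu).
    assert (Hcu : D c u = S e) by lia.
    assert (Huw := T2 c u w' w (S e) Hu (Hsym _ _ Hww) Hcu Hc' ltac:(lia)).
    subst u. lia.
Qed.

Lemma Crosses L c g n : adj L c -> (forall i, (i < n)%nat -> adj (g i) (g (S i))) ->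
  D c (g 0%nat) = S (D L (g 0%nat)) -> D c (g n) <> S (D L (g n)) -> exists t, (t <= n)%nat /\ g t = c.
Proof.
  intros HLc Hs H0 Hn.
  assert (G : forall t, (t <= n)%nat -> D c (g t) = S (D L (g t)) \/ exists t', (t' <= t)%nat /\ g t' = c).
  { induction t as [|t IH]; intros Ht; [left; exact H0|].
    destruct IH as [IH|(t' & Ht' & Et')]; [lia| |right; exists t'; split; [lia|exact Et']].
    destruct (classic (D c (g (S t)) = S (D L (g (S t))))) as [E|E]; [left; exact E|].
    right. exists (S t). split; [lia|]. apply (Edge L c (g t) (g (S t)) HLc (Hs t ltac:(lia)) IH E). }
  destruct (G n (le_n n)) as [E|(t & Ht & Et)]; [contradiction|eauto].
Qed.

Lemma StepL k L c u v : adj L c -> (D u v <= k)%nat -> (k < D c u)%nat -> D c u = S (D L u) ->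
  D c v <> S (D L v) -> False.
Proof.
  intros HLc Huv Hcu Hu Hv.
  destruct (D_walk adj Hconn u v) as [f Hf]. pose proof (D_prefix u v f Hf) as Hp.
  destruct Hf as (F0 & Fn & Fs).
  destruct (Crosses L c f (D u v) HLc Fs) as (t & Ht & Et); [rewrite F0; exact Hu|rewrite Fn; exact Hv|].
  assert (E := Hp t Ht). rewrite Et, D_sym in E. lia.
Qed.
Variable p : V -> V -> R.
Variable k : nat.
Hypothesis Hrange : forall u v, (gdist adj u v > k)%nat -> p u v = 0.
Variable b : V.
Hypothesis Hb : (F b m <= k)%nat.

Let out s := fun v => ~ ball adj k (xs s) v.

Lemma Enter s : (1 <= s <= m)%nat -> forall t w, chain (fun a b => 0 < p a b) (w :: t) -> last (w :: t) w = b ->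
  (k < F w s)%nat -> F w s = S (F w (pred s)) ->
  exists h z r, t = h ++ z :: r /\ Forall (fun v => ~ ball adj k (xs s) v) h /\ ball adj k (xs s) z.
Proof.
  intros Hs t. induction t as [|w1 t IH]; intros w Hc Hl Hk HL.
  - simpl in Hl. subst w. exfalso. exact (notLside b k s Hs Hk Hb HL).
  - destruct Hc as [Hp Hc].
    assert (Hd : (D w w1 <= k)%nat).
    { destruct (Nat.le_gt_cases (D w w1) k) as [|Hgt]; [assumption|]. rewrite (Hrange _ _ Hgt) in Hp. lra. }
    destruct (classic (ball adj k (xs s) w1)) as [Hin|Hout].
    + exists [], w1, t. split; [reflexivity|]. split; [constructor|exact Hin].
    + assert (Hk1 : (k < F w1 s)%nat) by (unfold ball in Hout; unfold F; lia).
      assert (HL1 : F w1 s = S (F w1 (pred s))).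
      { apply NNPP. intros Hn. apply (StepL k (xs (pred s)) (xs s) w w1); auto.
        replace s with (S (pred s)) at 2 by lia. apply Hxs; lia. }
      assert (Hl1 : last (w1 :: t) w1 = b). { simpl in Hl. rewrite <- Hl. apply last_default. }
      destruct (IH w1 Hc Hl1 Hk1 HL1) as (h & z & r & Et & Hh & Hz).
      exists (w1 :: h), z, r. split; [rewrite Et; reflexivity|]. split; [constructor; assumption|exact Hz].
Qed.

Definition gdec i0 (g : list V) l (c : nat -> V) (i : nat -> nat) (gs : nat -> list V) (gf : list V) : Prop :=
  (1 <= l)%nat /\ (i0 < i 1%nat)%nat /\ (forall s, (1 <= s < l)%nat -> (i s < i (S s))%nat) /\ (i l <= m)%nat /\
  ball adj k (xs i0) (c 0%nat) /\ sphere adj k (xs (i 1%nat)) (c 0%nat) /\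
  (forall j, (1 <= j < l)%nat -> ball adj k (xs (i j)) (c j) /\ sphere adj k (xs (i (S j))) (c j)) /\
  ball adj k (xs (i l)) (c l) /\ ball adj k (xs m) (c l) /\
  (forall j, (1 <= j <= l)%nat -> Xi_w adj p k (xs (i j)) (c (pred j)) (c j)) /\
  (forall s, (1 <= s <= l)%nat -> Ph_in p (c (pred s)) (c s) (fun v => ~ ball adj k (xs (i s)) v) (gs s)) /\
  Ph p (c l) b gf /\ g = concat_all gs l gf.

Lemma concat_all_S (gs : nat -> list V) l gf :
  concat_all gs (S l) gf = pconcat (gs 1%nat) (concat_all (fun n => gs (S n)) l gf).
Proof.
  unfold concat_all. change (seq 1 (S l)) with (1%nat :: seq 2 l). simpl map. simpl fold_right.
  f_equal. rewrite <- seq_shift, map_map. reflexivity.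
Qed.

Lemma concat_all_ext (gs gs' : nat -> list V) l gf :
  (forall n, (1 <= n <= l)%nat -> gs n = gs' n) -> concat_all gs l gf = concat_all gs' l gf.
Proof.
  intros H. unfold concat_all. f_equal. apply map_ext_in. intros a Ha. apply in_seq in Ha. apply H. lia.
Qed.

Lemma gdec_mono i0 g l c i gs gf : gdec i0 g l c i gs gf ->
  forall j1 j2, (1 <= j1 <= j2)%nat -> (j2 <= l)%nat -> (i j1 <= i j2)%nat.
Proof.
  intros (_ & _ & Hinc & _) j1 j2 H1 H2. induction j2 as [|j2 IH]; [lia|].
  destruct (Nat.eq_dec j1 (S j2)) as [->|]; [lia|].
  assert (i j2 < i (S j2))%nat by (apply Hinc; lia). specialize (IH ltac:(lia) ltac:(lia)). lia.
Qed.

Lemma gdec_lb i0 g l c i gs gf : gdec i0 g l c i gs gf -> forall j, (1 <= j <= l)%nat -> (i0 + j <= i j)%nat.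
Proof.
  intros (_ & H1 & Hinc & _) j Hj. induction j as [|j IH]; [lia|].
  destruct j as [|j]; [lia|]. assert (i (S j) < i (S (S j)))%nat by (apply Hinc; lia).
  specialize (IH ltac:(lia)). lia.
Qed.

Lemma gdec_head i0 g l c i gs gf : gdec i0 g l c i gs gf -> exists t, g = c 0%nat :: t.
Proof.
  intros (Hl & _ & _ & _ & _ & _ & _ & _ & _ & _ & Hseg & _ & Hg).
  destruct l as [|l]; [lia|]. rewrite concat_all_S in Hg.
  destruct (Hseg 1%nat ltac:(lia)) as (t & Et & _). simpl pred in Et.
  rewrite Hg, Et. eexists. reflexivity.
Qed.

Lemma gdec_tail i0 g l c i gs gf : gdec i0 g (S (S l)) c i gs gf ->
  g = pconcat (gs 1%nat) (concat_all (fun n => gs (S n)) (S l) gf) /\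
  gdec (i 1%nat) (concat_all (fun n => gs (S n)) (S l) gf) (S l) (fun n => c (S n)) (fun n => i (S n)) (fun n => gs (S n)) gf.
Proof.
  intros (Hl & H1 & Hinc & Him & Hb0 & Hs0 & Hmid & Hbl & Hbm & Hxi & Hseg & Hf & Hg).
  split; [rewrite Hg, concat_all_S; reflexivity|].
  unfold gdec. split; [lia|]. split; [apply Hinc; lia|]. split.
  { intros s Hs. apply Hinc; lia. }
  split; [exact Him|]. split; [apply (Hmid 1%nat); lia|]. split; [apply (Hmid 1%nat); lia|].
  split. { intros j Hj. apply (Hmid (S j)); lia. }
  split; [exact Hbl|]. split; [exact Hbm|]. split.
  { intros j Hj. replace (S (pred j)) with (pred (S j)) by lia. apply Hxi; lia. }
  split.
  { intros s Hs. replace (S (pred s)) with (pred (S s)) by lia. apply Hseg; lia. }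
  split; [exact Hf|reflexivity].
Qed.

Lemma gdec_one i0 s u z g1 gf : (i0 < s <= m)%nat -> ball adj k (xs i0) u -> sphere adj k (xs s) u ->
  ball adj k (xs s) z -> ball adj k (xs m) z ->
  Ph_in p u z (fun v => ~ ball adj k (xs s) v) g1 -> Ph p z b gf ->
  gdec i0 (pconcat g1 gf) 1 (fun n => match n with 0 => u | _ => z end) (fun _ => s) (fun _ => g1) gf.
Proof.
  intros Hs Hu1 Hu2 Hz1 Hz2 Hg1 Hgf. unfold gdec.
  split; [lia|]. split; [lia|]. split; [intros; lia|]. split; [lia|].
  split; [exact Hu1|]. split; [exact Hu2|]. split; [intros; lia|].
  split; [exact Hz1|]. split; [exact Hz2|]. split.
  { intros j Hj. replace j with 1%nat by lia. simpl. split; [exact Hu2|]. split; [exact Hz1|]. eauto. }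
  split.
  { intros j Hj. replace j with 1%nat by lia. exact Hg1. }
  split; [exact Hgf|reflexivity].
Qed.

Lemma gdec_cons i0 s u g1 g l c i gs gf : gdec s g l c i gs gf -> (i0 < s)%nat ->
  ball adj k (xs i0) u -> sphere adj k (xs s) u ->
  Ph_in p u (c 0%nat) (fun v => ~ ball adj k (xs s) v) g1 ->
  gdec i0 (pconcat g1 g) (S l) (fun n => match n with 0 => u | S j => c j end)
    (fun n => match n with 0 => 0%nat | 1 => s | S j => i j end)
    (fun n => match n with 0 | 1 => g1 | S j => gs j end) gf.
Proof.
  intros (Hl & H1 & Hinc & Him & Hb0 & Hs0 & Hmid & Hbl & Hbm & Hxi & Hseg & Hf & Hg) Hs Hu1 Hu2 Hg1.
  unfold gdec. split; [lia|]. split; [exact Hs|]. split.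
  { intros j Hj. destruct j as [|[|j]]; [lia|exact H1|]. apply Hinc; lia. }
  split; [destruct l as [|l]; [lia|exact Him]|].
  split; [exact Hu1|]. split; [exact Hu2|]. split.
  { intros j Hj. destruct j as [|[|j]]; [lia|split; [exact Hb0|exact Hs0]|]. apply Hmid; lia. }
  split; [destruct l as [|l]; [lia|exact Hbl]|]. split; [exact Hbm|]. split.
  { intros j Hj. destruct j as [|[|j]]; [lia| |].
    - simpl. split; [exact Hu2|]. split; [exact Hb0|]. eauto.
    - apply (Hxi (S j)). lia. }
  split.
  { intros j Hj. destruct j as [|[|j]]; [lia|exact Hg1|]. apply (Hseg (S j)). lia. }
  split; [exact Hf|].
  rewrite concat_all_S, Hg. f_equal. apply concat_all_ext. intros n Hn. destruct n; [lia|reflexivity].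
Qed.
Lemma Ex n : forall g i0 u, (length g <= n)%nat -> (i0 <= m)%nat -> Ph p u b g ->
  (F u i0 <= k)%nat -> (k < F u m)%nat -> exists l c i gs gf, gdec i0 g l c i gs gf.
Proof.
  induction n as [|n IH]; intros g i0 u Hlen Hi0 Hg Hu0 Hum;
    destruct Hg as (t & -> & [_ Hc] & Hlast); [simpl in Hlen; lia|].
  destruct (Cross_exists u k i0 Hi0 Hu0 Hum) as (s & Hs & Es).
  assert (HL := Lside_cross u k i0 s Hs Hu0 Es).
  destruct (Enter s ltac:(lia) t u Hc Hlast ltac:(lia) HL) as (h & z & r & Et & Hh & Hz).
  subst t.
  assert (Hsplit : u :: h ++ z :: r = (u :: h ++ [z]) ++ r) by (simpl; rewrite <- app_assoc; reflexivity).
  assert (Hsplit2 : u :: h ++ z :: r = (u :: h) ++ z :: r) by reflexivity.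
  assert (Hg1 : Ph_in p u z (fun v => ~ ball adj k (xs s) v) (u :: h ++ [z])).
  { exists (h ++ [z]). split; [reflexivity|]. split.
    - split; [discriminate|]. rewrite Hsplit in Hc. exact (proj1 (chain_app _ _ _ Hc)).
    - split. + change (u :: h ++ [z]) with ((u :: h) ++ [z]). apply last_last.
      + rewrite removelast_last. exact Hh. }
  assert (Hgf : Ph p z b (z :: r)).
  { exists r. split; [reflexivity|]. split.
    - split; [discriminate|]. rewrite Hsplit2 in Hc. exact (proj2 (chain_app _ _ _ Hc)).
    - rewrite Hsplit2, last_app' in Hlast by discriminate. rewrite <- Hlast. apply last_default. }
  assert (Hsph : sphere adj k (xs s) u) by exact Es.
  assert (Hb0 : ball adj k (xs i0) u) by exact Hu0.
  assert (Eg : u :: h ++ z :: r = pconcat (u :: h ++ [z]) (z :: r)).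
  { unfold pconcat. simpl tl. rewrite <- Hsplit. reflexivity. }
  rewrite Eg.
  destruct (classic (ball adj k (xs m) z)) as [Hzm|Hzm].
  - exists 1%nat. eexists. eexists. eexists. eexists.
    apply (gdec_one i0 s u z); [lia|exact Hb0|exact Hsph|exact Hz|exact Hzm|exact Hg1|exact Hgf].
  - destruct (IH (z :: r) s z) as (l & c & i & gs & gf & Hd).
    + simpl in Hlen |- *. rewrite length_app in Hlen. simpl in Hlen. lia.
    + lia.
    + exact Hgf.
    + exact Hz.
    + unfold ball in Hzm. unfold F. lia.
    + destruct (gdec_head _ _ _ _ _ _ _ Hd) as [t0 Ht0]. injection Ht0 as Hc0 _.
      assert (Hg1' : Ph_in p u (c 0%nat) (fun v => ~ ball adj k (xs s) v) (u :: h ++ [z])) by (rewrite <- Hc0; exact Hg1).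
      do 5 eexists. apply (gdec_cons i0 s u _ _ l c i gs gf Hd); [lia|exact Hb0|exact Hsph|exact Hg1'].
Qed.

Lemma seg_eq (P : V -> Prop) h1 z1 r1 : forall h2 z2 r2, h1 ++ z1 :: r1 = h2 ++ z2 :: r2 ->
  Forall (fun v => ~ P v) h1 -> Forall (fun v => ~ P v) h2 -> P z1 -> P z2 -> h1 = h2 /\ z1 = z2 /\ r1 = r2.
Proof.
  induction h1 as [|a h1 IH]; intros h2 z2 r2 E F1 F2 P1 P2; destruct h2 as [|a2 h2]; simpl in E.
  - injection E as -> ->. auto.
  - injection E as -> _. inversion F2; contradiction.
  - injection E as -> _. inversion F1; contradiction.
  - injection E as -> E. inversion F1; inversion F2; subst.
    destruct (IH h2 z2 r2 E) as (-> & -> & ->); auto.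
Qed.

Lemma seg_form u z (Om : V -> Prop) g : Ph_in p u z Om g -> Om u -> ~ Om z -> exists h, g = h ++ [z] /\ Forall Om h.
Proof.
  intros (t & -> & _ & Hl & Hf) Hu Hz. destruct t as [|a t].
  - simpl in Hl. subst. contradiction.
  - exists (u :: removelast (a :: t)). change (last (a :: t) u = z) in Hl.
    assert (E := @app_removelast_last V (a :: t) u ltac:(discriminate)). rewrite Hl in E.
    split; [rewrite E at 1; reflexivity|constructor; assumption].
Qed.

Lemma Un l : forall i0 g c i gs gf l' c' i' gs' gf', (i0 <= m)%nat ->
  gdec i0 g l c i gs gf -> gdec i0 g l' c' i' gs' gf' ->
  l' = l /\ (forall j, (j <= l)%nat -> c' j = c j) /\
  (forall s, (1 <= s <= l)%nat -> gs' s = gs s) /\ gf' = gf.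
Proof.
  induction l as [|l IH]; intros i0 g c i gs gf l' c' i' gs' gf' Hi0 Hd Hd'.
  { destruct Hd; lia. }
  destruct (gdec_head _ _ _ _ _ _ _ Hd) as [t Ht]. destruct (gdec_head _ _ _ _ _ _ _ Hd') as [t' Ht'].
  assert (Hc0 : c' 0%nat = c 0%nat) by (rewrite Ht in Ht'; injection Ht'; auto).
  pose proof Hd as Hd0. pose proof Hd' as Hd0'.
  assert (Mono := gdec_mono _ _ _ _ _ _ _ Hd). assert (Mono' := gdec_mono _ _ _ _ _ _ _ Hd').
  destruct Hd as (Hl & H1 & Hinc & Him & Hb0 & Hs0 & Hmid & Hbl & Hbm & Hxi & Hseg & Hf & Hg).
  destruct Hd' as (Hl' & H1' & Hinc' & Him' & Hb0' & Hs0' & Hmid' & Hbl' & Hbm' & Hxi' & Hseg' & Hf' & Hg').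
  destruct l' as [|l']; [lia|].
  assert (Hi1 : i' 1%nat = i 1%nat).
  { apply (SphereUniq (c 0%nat) k i0 (i' 1%nat) (i 1%nat)).
    - split; [lia|]. specialize (Mono' 1%nat (S l') ltac:(lia) ltac:(lia)). lia.
    - split; [lia|]. specialize (Mono 1%nat (S l) ltac:(lia) ltac:(lia)). lia.
    - exact Hb0.
    - rewrite <- Hc0. exact Hs0'.
    - exact Hs0. }
  assert (Hball1 : ball adj k (xs (i 1%nat)) (c 1%nat)).
  { destruct l as [|l]; [exact Hbl|]. apply (Hmid 1%nat); lia. }
  assert (Hball1' : ball adj k (xs (i 1%nat)) (c' 1%nat)).
  { rewrite <- Hi1. destruct l' as [|l']; [exact Hbl'|]. apply (Hmid' 1%nat); lia. }
  destruct (seg_form _ _ _ _ (Hseg 1%nat ltac:(lia))) as (h & Eh & Fh); [intros H; simpl pred in H; unfold ball, sphere in *; lia|intros HH; apply HH; exact Hball1|].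
  destruct (seg_form _ _ _ _ (Hseg' 1%nat ltac:(lia))) as (h' & Eh' & Fh');
    [intros H; simpl pred in H; rewrite Hc0 in H; unfold ball, sphere in *; rewrite Hi1 in *; lia|intros HH; apply HH; rewrite Hi1; exact Hball1'|].
  simpl pred in Eh, Eh'. rewrite Hi1 in Fh'.
  rewrite concat_all_S in Hg, Hg'. unfold pconcat in Hg, Hg' at 1.
  rewrite Eh, <- app_assoc in Hg. rewrite Eh', <- app_assoc in Hg'. simpl in Hg, Hg'.
  rewrite Hg in Hg'.
  destruct (seg_eq (ball adj k (xs (i 1%nat))) h (c 1%nat) _ h' (c' 1%nat) _ Hg' Fh Fh' Hball1 Hball1')
    as (<- & Hc1 & Htl).
  assert (Hgs1 : gs' 1%nat = gs 1%nat) by (rewrite Eh, Eh', Hc1; reflexivity).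
  destruct l as [|l]; destruct l' as [|l'].
  -
    simpl in Htl. destruct Hf as (tf & Etf & _). destruct Hf' as (tf' & Etf' & _).
    rewrite Etf, Etf' in Htl. simpl in Htl.
    split; [reflexivity|]. split.
    + intros j Hj. destruct j as [|[|j]]; [exact Hc0|symmetry; exact Hc1|lia].
    + split. * intros s Hs. replace s with 1%nat by lia. exact Hgs1.
      * rewrite Etf, Etf', Htl, Hc1. reflexivity.
  - exfalso. destruct (Hmid' 1%nat ltac:(lia)) as [_ Hsph].
    assert (Hm2 : (i' 2%nat <= m)%nat) by (specialize (Mono' 2%nat (S (S l')) ltac:(lia) ltac:(lia)); lia).
    assert (Hlt : (i' 1%nat < i' 2%nat)%nat) by (apply Hinc'; lia).
    assert (Hcv := Conv (c 1%nat) k (i' 1%nat) (i' 2%nat) m ltac:(lia) (le_n m)).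
    unfold ball, sphere, F in *. rewrite <- Hc1 in *. rewrite Hi1 in *. lia.
  - exfalso. destruct (Hmid 1%nat ltac:(lia)) as [_ Hsph].
    assert (Hm2 : (i 2%nat <= m)%nat) by (specialize (Mono 2%nat (S (S l)) ltac:(lia) ltac:(lia)); lia).
    assert (Hlt : (i 1%nat < i 2%nat)%nat) by (apply Hinc; lia).
    assert (Hcv := Conv (c 1%nat) k (i 1%nat) (i 2%nat) m ltac:(lia) (le_n m)).
    unfold ball, sphere, F in *. rewrite <- Hc1 in *. lia.
  - destruct (gdec_tail _ _ _ _ _ _ _ Hd0) as [_ HdR].
    destruct (gdec_tail _ _ _ _ _ _ _ Hd0') as [_ HdR'].
    destruct (gdec_head _ _ _ _ _ _ _ HdR) as [tR EtR].
    destruct (gdec_head _ _ _ _ _ _ _ HdR') as [tR' EtR'].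
    rewrite EtR, EtR' in Htl. simpl in Htl.
    assert (ER : concat_all (fun n => gs' (S n)) (S l') gf' = concat_all (fun n => gs (S n)) (S l) gf)
      by (rewrite EtR, EtR', Htl, Hc1; reflexivity).
    rewrite ER, Hi1 in HdR'.
    assert (Him1 : (i 1%nat <= m)%nat) by (specialize (Mono 1%nat (S (S l)) ltac:(lia) ltac:(lia)); lia).
    destruct (IH _ _ _ _ _ _ _ _ _ _ _ Him1 HdR HdR') as (El & Ec & Egs & Egf).
    split; [lia|]. split.
    + intros j Hj. destruct j as [|j]; [exact Hc0|]. apply (Ec j). lia.
    + split; [|exact Egf]. intros s Hs. destruct s as [|[|s]]; [lia|exact Hgs1|]. apply (Egs (S s)). lia.
Qed.

End Geo.

Theorem proposition3p20 (V : Type) (adj : V -> V -> Prop) (p : V -> V -> R) (k : nat)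
  (Htree : is_tree adj) (Hval : bounded_valence adj)
  (Hker : transition_kernel p) (Hirr : irreducible p)
  (Hrange : forall u v, (gdist adj u v > k)%nat -> p u v = 0)
  (a b : V) (gamma : list V) (Hgamma : Ph p a b gamma)
  (x y : V) (Hxy : x <> y)
  (Ha : ball adj k x a /\ ~ ball adj k y a) (Hb : ball adj k y b)
  (xs : nat -> V) (m : nat) (Hgeod : geodesic adj x y xs m) :
  exists (l : nat) (c : nat -> V) (i : nat -> nat) (gs : nat -> list V) (gf : list V),
    decomposition adj p k xs m b gamma l c i gs gf /\
    (forall (l' : nat) (c' : nat -> V) (i' : nat -> nat) (gs' : nat -> list V) (gf' : list V),
       decomposition adj p k xs m b gamma l' c' i' gs' gf' ->
       l' = l /\ (forall j, (j <= l)%nat -> c' j = c j) /\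
       (forall s, (1 <= s <= l)%nat -> gs' s = gs s) /\ gf' = gf).
Proof.
  destruct Hgeod as (Hx0 & Hym & Hmd & Hxs).
  assert (Hm : m = gdist adj (xs 0%nat) (xs m)) by (rewrite Hx0, Hym; exact Hmd).
  assert (Hb' : (F V adj xs b m <= k)%nat) by (unfold F; rewrite Hym; exact Hb).
  assert (dec_to : forall l c i gs gf, decomposition adj p k xs m b gamma l c i gs gf ->
            gdec V adj xs m p k b 0 gamma l c i gs gf).
  { intros l c i gs gf ((Hl & H1 & Hinc & Him & Hb0 & Hs0 & Hmid & Hbl & Hbm & Hxi) & Hseg & Hf & Hg).
    repeat split; auto; try lia; try (apply Hmid; lia); try apply Hxi; try apply Hseg; auto.
    all: destruct (Hmid j); auto. }
  destruct (Ex V adj Htree xs m Hxs Hm p k Hrange b Hb' (length gamma) gamma 0 a (le_n _) ltac:(lia) Hgamma)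
    as (l & c & i & gs & gf & Hd).
  - unfold F. rewrite Hx0. exact (proj1 Ha).
  - unfold F. rewrite Hym. unfold ball in Ha. lia.
  - exists l, c, i, gs, gf. split.
    + assert (Hlm : (l <= m)%nat).
      { assert (E := gdec_lb V adj xs m Hm p k b Hb' _ _ _ _ _ _ _ Hd l).
        destruct Hd as (Hl & _ & _ & Him & _). specialize (E ltac:(lia)). lia. }
      destruct Hd as (Hl & H1 & Hinc & Him & Hb0 & Hs0 & Hmid & Hbl & Hbm & Hxi & Hseg & Hf & Hg).
      split; [|split; [exact Hseg|split; [exact Hf|exact Hg]]].
      split; [lia|]. repeat (split; [assumption|]). assumption.
    + intros l' c' i' gs' gf' Hdec.
      exact (Un V adj Htree xs m Hxs Hm p k b Hb' l 0 gamma c i gs gf l' c' i' gs' gf' ltac:(lia) Hd (dec_to _ _ _ _ _ Hdec)).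
Qed.
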